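(* Let $G=(V,E)$ be a simple undirected graph and let $i\in V$ have degree $\delta$. Let $S$ be the induced star returned by the Simple Greedy algorithm (described in the context) started at $i$. Then Simple Greedy has approximation ratio $O(\delta)$: the star degree centrality $\mathcal{C}^s(i)$ satisfies $\mathcal{C}^s(i)/|N(S)| = O(\delta)$.
   Context: For $S\subseteq V$, $N(S)=\{j\in V\setminus S : (a,j)\in E \text{ for some } a\in S\}$ and $N[j]=N(\{j\})\cup\{j\}$. A set $S$ forms an induced star if $G[S]$ has exactly one node of degree $|S|-1$ (the center) and $|S|-1$ nodes of degree $1$. The star degree centrality of $i$ is $\mathcal{C}^s(i)=\max\{|N(S)| : S\subseteq V \text{ forms an induced star centered at } i\}$. Define $f_1(S,k)=|N(S\cup\{k\})|-|N(S)|$. Simple Greedy on input $i$: set $candidates\leftarrow N(i)$, $S\leftarrow\{i\}$. While $candidates\neq\emptyset$: remove from $candidates$ every $k$ with $f_1(S,k)\leq 0$; if $candidates\neq\emptyset$, pick $j\in\arg\max_{k\in candidates} f_1(S,k)$, set $S\leftarrow S\cup\{j\}$ and $candidates\leftarrow candidates\setminus N[j]$. Return $S$. *)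

(* Defs.v *)
(* A simple undirected graph on a finite vertex type T is a
   symmetric irreflexive relation e : rel T. *)
From mathcomp Require Import all_boot all_order all_algebra.
Set Implicit Arguments. Unset Strict Implicit. Unset Printing Implicit Defensive.
Import GRing.Theory Num.Theory.

Section Graph.
Variables (T : finType) (e : rel T).

Definition nbhd (S : {set T}) : {set T} :=
  [set j | (j \notin S) && [exists a in S, e a j]].

Definition cnbhd (j : T) : {set T} := j |: nbhd [set j].

Definition deg (i : T) : nat := #|[set j | e i j]|.

Definition deg_in (S : {set T}) (v : T) : nat := #|[set u in S | e v u]|.

Definition induced_star_at (S : {set T}) (i : T) : bool :=
  [&& i \in S, deg_in S i == #|S| - 1 &
      [forall v in S, (v != i) ==> (deg_in S v == 1)]].

Definition star_centrality (i : T) : nat :=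
  \max_(S : {set T} | induced_star_at S i) #|nbhd S|.

Definition f1 (S : {set T}) (k : T) : int :=
  (#|nbhd (k |: S)|%:Z - #|nbhd S|%:Z)%R.

(* greedy_run S cand R : starting from the state (S, candidates = cand) of the
   while loop, some execution of Simple Greedy (ties in argmax broken
   arbitrarily) returns R. *)
Inductive greedy_run : {set T} -> {set T} -> {set T} -> Prop :=
| greedy_stop (S cand : {set T}) :
    [set k in cand | (0 < f1 S k)%R] = set0 ->
    greedy_run S cand S
| greedy_step (S cand : {set T}) (j : T) (R : {set T}) :
    j \in [set k in cand | (0 < f1 S k)%R] ->
    (forall k, k \in [set k in cand | (0 < f1 S k)%R] -> (f1 S k <= f1 S j)%R) ->
    greedy_run (j |: S) ([set k in cand | (0 < f1 S k)%R] :\: cnbhd j) R ->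
    greedy_run S cand R.

Definition simple_greedy_output (i : T) (S : {set T}) : Prop :=
  greedy_run [set i] (nbhd [set i]) S.

End Graph.

(* Main.v *)
Require Import Defs.
From mathcomp Require Import all_boot all_order all_algebra.
From mathcomp Require Import zify.
Import GRing.Theory Num.Theory.
Set Implicit Arguments. Unset Strict Implicit.

Lemma greedy_inv (T : finType) (e : rel T) S cand R :
  greedy_run e S cand R ->
  #|nbhd e S| <= #|nbhd e R| /\
  (forall k, k \in cand -> (0 < f1 e S k)%R -> #|nbhd e (k |: S)| <= #|nbhd e R|).
Proof.
elim=> {S cand R} [S cand H0|S cand j R Hj Hmax _ [IH1 IH2]].
  split=> // k kc kpos.
  have : k \in [set k in cand | (0 < f1 e S k)%R] by rewrite inE kc kpos.
  by rewrite H0 inE.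
have Hj' := Hj; rewrite inE in Hj'; case/andP: Hj' => _ jpos.
move: jpos; rewrite /f1 subr_gt0 ltz_nat => jlt.
split; first by apply: leq_trans (ltnW jlt) IH1.
move=> k kc kpos.
have kin : k \in [set k in cand | (0 < f1 e S k)%R] by rewrite inE kc kpos.
have := Hmax k kin; rewrite /f1 lerD2r lez_nat => kle.
by apply: leq_trans kle IH1.
Qed.

Lemma card_bigcup_le (T I : finType) (L : {set I}) (F : I -> {set T}) :
  #|\bigcup_(l in L) F l| <= \sum_(l in L) #|F l|.
Proof.
apply: (big_ind2 (fun (A : {set T}) (n : nat) => #|A| <= n)).
- by rewrite cards0.
- move=> A m B n HA HB; rewrite cardsU.
  apply: leq_trans (leq_subr _ _) _; exact: leq_add.
- by [].
Qed.

Theorem theorem3 :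
  exists c : nat,
    forall (T : finType) (e : rel T), symmetric e -> irreflexive e ->
    forall (i : T) (S : {set T}),
      simple_greedy_output e i S ->
      star_centrality e i <= c * deg e i * #|nbhd e S|.
Proof.
exists 1%N => T e _ irr i R HR.
have [Hm Hk] := greedy_inv HR.
have Ndeg : nbhd e [set i] = [set j | e i j].
  apply/setP=> j; rewrite !inE; apply/andP/idP.
    by case=> _ /existsP [a]; rewrite inE => /andP [/eqP -> ].
  move=> eij; split; last by apply/existsP; exists i; rewrite inE eqxx.
  by apply/negP => /eqP ji; rewrite ji irr in eij.
have degE : deg e i = #|nbhd e [set i]| by rewrite Ndeg.
have Hl : forall l, e i l -> #|nbhd e (l |: [set i])| <= #|nbhd e R|.
  move=> l eil.
  have lin : l \in nbhd e [set i] by rewrite Ndeg inE.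
  case: (ltrP 0%R (f1 e [set i] l)) => [pos|npos]; first exact: Hk.
  move: npos; rewrite /f1 subr_le0 lez_nat => le.
  exact: leq_trans le Hm.
rewrite mul1n; apply/bigmax_leqP => S' /and3P [iS /eqP dS _].
set L := S' :\ i.
have LE : [set u in S' | e i u] = L.
  apply/eqP; rewrite eqEcard; apply/andP; split.
    apply/subsetP=> u; rewrite !inE => /andP [uS eiu]; rewrite uS andbT.
    by apply/negP=> /eqP ui; rewrite ui irr in eiu.
  by rewrite /deg_in in dS; rewrite dS /L (cardsD1 i S') iS add1n subn1.
have Lnb : forall l, l \in L -> e i l.
  by move=> l; rewrite -LE inE => /andP [].
have cardL : #|L| <= deg e i.
  rewrite /deg; apply: subset_leq_card; apply/subsetP=> l lL; rewrite inE; exact: Lnb.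
case: (set_0Vmem L) => [L0|[l0 l0L]].
  have S'E : S' = [set i].
    apply/setP=> u; rewrite inE; apply/idP/eqP => [uS|->//].
    apply/eqP/negPn/negP=> ui; have : u \in L by rewrite /L !inE ui.
    by rewrite L0 inE.
  rewrite S'E -degE.
  case: (posnP (deg e i)) => [->//|dpos].
  by rewrite leq_pmulr // (leq_trans dpos) // degE.
have sub : nbhd e S' \subset \bigcup_(l in L) nbhd e (l |: [set i]).
  apply/subsetP=> x; rewrite inE => /andP [xS /existsP [a /andP [aS eax]]].
  have [ai|ani] := eqVneq a i.
    apply/bigcupP; exists l0 => //.
    have l0S : l0 \in S' by move: l0L; rewrite !inE => /andP [].
    rewrite inE !inE; apply/andP; split.
      apply/negP => /orP [/eqP xl|/eqP xi].
        by rewrite xl l0S in xS.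
      by rewrite xi iS in xS.
    by apply/existsP; exists i; rewrite !inE eqxx orbT -ai.
  have aL : a \in L by rewrite !inE ani.
  apply/bigcupP; exists a => //.
  rewrite !inE; apply/andP; split.
    apply/negP => /orP [/eqP xa|/eqP xi].
      by rewrite xa aS in xS.
    by rewrite xi iS in xS.
  by apply/existsP; exists a; rewrite !inE eqxx eax.
apply: leq_trans (subset_leq_card sub) _.
apply: leq_trans (card_bigcup_le _ _) _.
apply: (@leq_trans (\sum_(l in L) #|nbhd e R|)); first by apply: leq_sum => l lL; apply: Hl; apply: Lnb.
rewrite sum_nat_const; exact: leq_mul.
Qed.
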